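(* For every parameter $\rho\in\{\mathrm{sn},\underline{\mathrm{lcs}},\overline{\mathrm{scs}},\overline{\mathrm{lcs}}\}$ and every $N>0$, there exist graphs $H\subsetneq G$ ($H$ a proper subgraph of $G$) with $\chi(H)=\chi(G)$ such that $\rho(H)>N\rho(G)$.
   Context: All graphs are finite and simple. For a graph $G=(V,E)$ with $k=\chi(G)$, a proper $k$-colouring is a map $c:V\to[k]$ with $c(u)\neq c(v)$ for every edge $uv$. A set $S\subseteq V$ is a determining set for $(G,c)$ if there is no proper $k$-colouring $c'\neq c$ with $c'(s)=c(s)$ for all $s\in S$; a critical set is an inclusion-minimal determining set. $\mathrm{scs}(G,c)$ and $\mathrm{lcs}(G,c)$ are the sizes of a smallest resp. largest critical set for $(G,c)$. Over all proper $\chi(G)$-colourings $c$: $\mathrm{sn}(G)=\min_c\mathrm{scs}(G,c)$, $\underline{\mathrm{lcs}}(G)=\min_c\mathrm{lcs}(G,c)$, $\overline{\mathrm{scs}}(G)=\max_c\mathrm{scs}(G,c)$, $\overline{\mathrm{lcs}}(G)=\max_c\mathrm{lcs}(G,c)$. *)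

(* Defs.v *)
From mathcomp Require Import all_boot.
Set Implicit Arguments. Unset Strict Implicit. Unset Printing Implicit Defensive.

Record sgraph := SGraph {
  vert : finType;
  adj : rel vert;
  adj_sym : symmetric adj;
  adj_irr : irreflexive adj }.

Section Params.
Variable G : sgraph.
Notation V := (vert G).

Definition proper_col k (c : {ffun V -> 'I_k}) : bool :=
  [forall u, forall v, adj u v ==> (c u != c v)].

Definition colourable k : bool := [exists c : {ffun V -> 'I_k}, proper_col c].

(* chromatic number: least k such that G has a proper k-colouring
   (k = #|V| always works, so the search in [0, #|V|] succeeds). *)
Definition chi : nat := find colourable (iota 0 #|V|.+1).

Definition determining (c : {ffun V -> 'I_chi}) (S : {set V}) : bool :=
  [forall c' : {ffun V -> 'I_chi},
     (proper_col c' && [forall s in S, c' s == c s]) ==> (c' == c)].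

Definition critical (c : {ffun V -> 'I_chi}) (S : {set V}) : bool :=
  minset (determining c) S.

(* smallest / largest critical set size (critical sets exist, e.g. inside
   [set: V]; every critical set has size <= #|V|, so #|V| is a neutral
   initial value for the min) *)
Definition scs (c : {ffun V -> 'I_chi}) : nat :=
  \big[minn/#|V|]_(S : {set V} | critical c S) #|S|.
Definition lcs (c : {ffun V -> 'I_chi}) : nat :=
  \max_(S : {set V} | critical c S) #|S|.

Definition sn : nat := \big[minn/#|V|]_(c | proper_col c) scs c.
Definition lcs_under : nat := \big[minn/#|V|]_(c | proper_col c) lcs c.
Definition scs_over : nat := \max_(c | proper_col c) scs c.
Definition lcs_over : nat := \max_(c | proper_col c) lcs c.

End Params.

Inductive param := P_sn | P_lcs_under | P_scs_over | P_lcs_over.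

Definition rho (p : param) (G : sgraph) : nat :=
  match p with
  | P_sn => sn G
  | P_lcs_under => lcs_under G
  | P_scs_over => scs_over G
  | P_lcs_over => lcs_over G
  end.

(* H is (isomorphic to) a proper subgraph of G: an injective vertex map
   sending edges of H to edges of G, which is not an isomorphism onto G
   (some vertex of G is missed, or some edge of G between image vertices
   is not an edge of H). *)
Definition proper_subgraph (H G : sgraph) : Prop :=
  exists f : vert H -> vert G,
    [/\ injective f,
        (forall x y, adj x y -> adj (f x) (f y)) &
        ((exists v, forall w, f w != v) \/
         (exists x y, adj (f x) (f y) && ~~ adj x y))].

(* Main.v *)
Require Import Defs.
From mathcomp Require Import all_boot.
Set Implicit Arguments. Unset Strict Implicit. Unset Printing Implicit Defensive.

Lemma setT_det (K : sgraph) (c : {ffun vert K -> 'I_(chi K)}) : determining c setT.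
Proof.
apply/forallP => c'; apply/implyP => /andP [_ /forall_inP Hs].
apply/eqP/ffunP => x; apply/eqP; exact: Hs (in_setT x).
Qed.

Lemma crit_exists (K : sgraph) (c : {ffun vert K -> 'I_(chi K)}) :
  exists S, critical c S.
Proof. have [S HS _] := minset_exists (setT_det c). by exists S. Qed.

Lemma bigmin_le (I : finType) (P : pred I) (F : I -> nat) x i :
  P i -> \big[minn/x]_(j | P j) F j <= F i.
Proof.
move=> Pi; rewrite -big_filter.
have : i \in [seq j <- index_enum I | P j] by rewrite mem_filter Pi mem_index_enum.
elim: [seq j <- index_enum I | P j] => //= a s IH; rewrite in_cons big_cons.
case/orP => [/eqP <-|/IH h]; first exact: geq_minl.
exact: leq_trans (geq_minr _ _) h.
Qed.

Lemma le_bigmin (I : finType) (P : pred I) (F : I -> nat) x m :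
  m <= x -> (forall i, P i -> m <= F i) -> m <= \big[minn/x]_(j | P j) F j.
Proof.
move=> hx hF; apply: (big_ind (fun y => m <= y)) => //.
by move=> a b ha hb; rewrite leq_min ha hb.
Qed.

Lemma rho_upper (K : sgraph) m :
  (exists c : {ffun vert K -> 'I_(chi K)}, proper_col c) ->
  (forall c : {ffun vert K -> 'I_(chi K)}, proper_col c ->
     forall S, critical c S -> #|S| <= m) ->
  forall p, rho p K <= m.
Proof.
move=> [c0 Pc0] Hb p.
have scs_le (c : {ffun vert K -> 'I_(chi K)}) : proper_col c -> scs c <= m.
  move=> Pc; have [S HS] := crit_exists c.
  rewrite /scs; apply: (leq_trans _ (Hb _ Pc _ HS)); exact: bigmin_le.
have lcs_le (c : {ffun vert K -> 'I_(chi K)}) : proper_col c -> lcs c <= m.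
  move=> Pc; rewrite /lcs; apply/bigmax_leqP => S HS; exact: (Hb _ Pc _ HS).
case: p => /=.
- rewrite /sn; exact: leq_trans (bigmin_le _ _ Pc0) (scs_le _ Pc0).
- rewrite /lcs_under; exact: leq_trans (bigmin_le _ _ Pc0) (lcs_le _ Pc0).
- by rewrite /scs_over; apply/bigmax_leqP => c; exact: scs_le.
- by rewrite /lcs_over; apply/bigmax_leqP => c; exact: lcs_le.
Qed.

Lemma rho_lower (K : sgraph) m :
  (exists c : {ffun vert K -> 'I_(chi K)}, proper_col c) ->
  m <= #|vert K| ->
  (forall c : {ffun vert K -> 'I_(chi K)}, proper_col c ->
     forall S, determining c S -> m <= #|S|) ->
  forall p, m <= rho p K.
Proof.
move=> [c0 Pc0] hx Hb p.
have scs_ge (c : {ffun vert K -> 'I_(chi K)}) : proper_col c -> m <= scs c.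
  move=> Pc; rewrite /scs; apply: le_bigmin => // S HS; exact: Hb Pc _ (minsetp HS).
have lcs_ge (c : {ffun vert K -> 'I_(chi K)}) : proper_col c -> m <= lcs c.
  move=> Pc; have [S HS] := crit_exists c.
  rewrite /lcs; apply: (leq_trans (Hb _ Pc _ (minsetp HS))).
  exact: (leq_bigmax_cond _ HS).
case: p => /=.
- rewrite /sn; exact: le_bigmin.
- rewrite /lcs_under; exact: le_bigmin.
- rewrite /scs_over; exact: leq_trans (scs_ge _ Pc0) (leq_bigmax_cond _ Pc0).
- rewrite /lcs_over; exact: leq_trans (lcs_ge _ Pc0) (leq_bigmax_cond _ Pc0).
Qed.

Lemma properP (K : sgraph) k (c : {ffun vert K -> 'I_k}) :
  proper_col c -> forall u v, adj u v -> c u != c v.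
Proof. by move=> /forallP P u v huv; move/forallP: (P u) => /(_ v) /implyP; apply. Qed.

Lemma properI (K : sgraph) k (c : {ffun vert K -> 'I_k}) :
  (forall u v, adj u v -> c u != c v) -> proper_col c.
Proof. by move=> P; apply/forallP => u; apply/forallP => v; apply/implyP; apply: P. Qed.

Section Graphs.
Variable n : nat.
Definition V := 'I_n.+2.

Definition Hadj : rel V := fun x y =>
  ((x:nat) == 0) && ((y:nat) == 1) || ((x:nat) == 1) && ((y:nat) == 0).
Definition Gadj : rel V := fun x y => ((x:nat) == 0) != ((y:nat) == 0).

Lemma Hadj_sym : symmetric Hadj.
Proof.
move=> [x hx] [y hy]; rewrite /Hadj /=.
by case: x hx => [|[|x]] hx; case: y hy => [|[|y]] hy.
Qed.
Lemma Hadj_irr : irreflexive Hadj.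
Proof. by move=> [[|[|x]] hx]. Qed.
Lemma Gadj_sym : symmetric Gadj.
Proof. by move=> x y; rewrite /Gadj; case: ((x:nat) == 0); case: ((y:nat) == 0). Qed.
Lemma Gadj_irr : irreflexive Gadj.
Proof. by move=> x; rewrite /Gadj eqxx. Qed.
Lemma Hadj_sub x y : Hadj x y -> Gadj x y.
Proof.
move: x y => [x hx] [y hy]; rewrite /Hadj /Gadj /=.
by case: x hx => [|[|x]] hx; case: y hy => [|[|y]] hy.
Qed.

Definition HH := SGraph Hadj_sym Hadj_irr.
Definition GG := SGraph Gadj_sym Gadj_irr.

Definition v0 : V := ord0.
Definition v1 : V := Ordinal (isT : 1 < n.+2).

Definition col2 : {ffun V -> 'I_2} :=
  [ffun x : V => if (x:nat) == 0 then ord0 else ord_max].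

Lemma col2_G : @proper_col GG 2 col2.
Proof.
apply: properI => u v; rewrite /= /Gadj !ffunE.
by case: ((u:nat) == 0); case: ((v:nat) == 0).
Qed.
Lemma col2_H : @proper_col HH 2 col2.
Proof.
apply: properI => u v /Hadj_sub; rewrite /= /Gadj !ffunE.
by case: ((u:nat) == 0); case: ((v:nat) == 0).
Qed.

Lemma chiH : chi HH = 2.
Proof.
rewrite /chi.
have -> : #|vert HH| = n.+2 by exact: card_ord.
rewrite /=.
have -> : colourable HH 0 = false.
  by apply/existsP => -[c _]; case: (c v0).
have -> : colourable HH 1 = false.
  apply/existsP => -[c /properP /(_ v0 v1 isT)].
  by rewrite (ord1 (c v0)) (ord1 (c v1)) eqxx.
have -> : colourable HH 2 by apply/existsP; exists col2; exact: col2_H.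
by [].
Qed.

Lemma chiG : chi GG = 2.
Proof.
rewrite /chi.
have -> : #|vert GG| = n.+2 by exact: card_ord.
rewrite /=.
have -> : colourable GG 0 = false.
  by apply/existsP => -[c _]; case: (c v0).
have -> : colourable GG 1 = false.
  apply/existsP => -[c /properP /(_ v0 v1 isT)].
  by rewrite (ord1 (c v0)) (ord1 (c v1)) eqxx.
have -> : colourable GG 2 by apply/existsP; exists col2; exact: col2_G.
by [].
Qed.

End Graphs.

Section Core.
Variable n : nat.

Lemma Hadj_lt2 (u w : vert (HH n)) : adj u w -> (u : nat) < 2 /\ (w : nat) < 2.
Proof. by rewrite /= /Hadj; case/orP => /andP [/eqP -> /eqP ->]. Qed.

Lemma flip_neq (a : 'I_(chi (HH n))) : rev_ord a != a.
Proof.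
move: a; rewrite chiH => -[[|[|a]] ha] //.
Qed.

Lemma H_det (c : {ffun vert (HH n) -> 'I_(chi (HH n))}) S :
  proper_col c -> determining c S -> n.+1 <= #|S|.
Proof.
move=> Pc /forallP hd.
have force (c' : {ffun vert (HH n) -> 'I_(chi (HH n))}) :
    proper_col c' -> (forall s, s \in S -> c' s = c s) -> c' = c.
  move=> Pc' ag; apply/eqP; move/implyP: (hd c'); apply.
  by rewrite Pc' /=; apply/forall_inP => s sS; rewrite ag.
have step1 (v : vert (HH n)) : 2 <= v -> v \in S.
  move=> v2; case vS: (v \in S) => //.
  pose c' := [ffun x => if x == v then rev_ord (c x) else c x].
  have: c' = c.
    apply: force.
      apply: properI => u w huw.
      have [u2 w2] := Hadj_lt2 huw.
      have uv : u != v by apply/eqP => E; move: u2; rewrite E ltnNge v2.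
      have wv : w != v by apply/eqP => E; move: w2; rewrite E ltnNge v2.
      by rewrite !ffunE (negbTE uv) (negbTE wv); exact: (properP Pc huw).
    move=> s sS; rewrite ffunE; case: eqP => // E.
    by move: sS; rewrite E vS.
  move/ffunP/(_ v); rewrite ffunE eqxx => /eqP.
  by rewrite (negbTE (flip_neq _)).
have : [exists w : vert (HH n), ((w : nat) < 2) && (w \in S)].
  apply: contraT => /existsPn hne.
  pose c' := [ffun x : vert (HH n) => if (x : nat) < 2 then rev_ord (c x) else c x].
  have: c' = c.
    apply: force.
      apply: properI => u w huw.
      have [u2 w2] := Hadj_lt2 huw.
      rewrite !ffunE u2 w2; apply/eqP => /rev_ord_inj /eqP.
      by rewrite (negbTE (properP Pc huw)).
    move=> s sS; rewrite ffunE; case: ltnP => // s2.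
    by move: (hne s); rewrite s2 sS.
  move/ffunP/(_ (v0 n)); rewrite ffunE /= => /eqP.
  by rewrite (negbTE (flip_neq _)).
case/existsP => w /andP [w2 wS].
pose w' : vert (HH n) := Ordinal (leq_ltn_trans (leq_subr w 1) (isT : 1 < n.+2)).
have sub : [set~ w'] \subset S.
  apply/subsetP => x; rewrite !inE => xw.
  case: (ltnP x 2) => x2; last exact: step1.
  have -> : x = w; last by [].
  apply: val_inj => /=; move: xw x2 w2; rewrite -(inj_eq val_inj) /=.
  by case: (w : nat) => [|[|?]]; case: (x : nat) => [|[|?]].
apply: leq_trans (subset_leq_card sub).
by rewrite cardsC1 card_ord.
Qed.

Lemma two_vals (a b d : 'I_(chi (GG n))) : a != b -> d != b -> a = d.
Proof.
move: a b d; rewrite chiG => -[[|[|a]] ha] // [[|[|b]] hb] // [[|[|d]] hd] //=;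
  by move=> *; apply: val_inj.
Qed.

Lemma G_det (c : {ffun vert (GG n) -> 'I_(chi (GG n))}) s :
  proper_col c -> determining c [set s].
Proof.
move=> Pc; apply/forallP => c'; apply/implyP => /andP [Pc' /forall_inP ag].
have es : c' s = c s by apply/eqP; apply: ag; rewrite inE.
have key (x y : vert (GG n)) : adj x y -> c' y = c y -> c' x = c x.
  move=> hxy ey; apply: (two_vals _ (properP Pc hxy)).
  by rewrite -ey (properP Pc' hxy).
have e0 : c' (v0 n) = c (v0 n).
  case: (eqVneq (s : nat) 0) => hs.
    by have -> : v0 n = s by apply: val_inj.
  by apply: key es; rewrite /= /Gadj /= (negbTE hs).
apply/eqP/ffunP => x.
case: (eqVneq (x : nat) 0) => hx.
  by have -> : x = v0 n by apply: val_inj.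
by apply: key e0; rewrite /= /Gadj /= (negbTE hx).
Qed.

Lemma G_crit (c : {ffun vert (GG n) -> 'I_(chi (GG n))}) S :
  proper_col c -> critical c S -> #|S| <= 1.
Proof.
move=> Pc cS; case: (set_0Vmem S) => [->|[s sS]]; first by rewrite cards0.
have := minsetinf cS (G_det s Pc); rewrite sub1set => /(_ sS) <-.
by rewrite cards1.
Qed.

End Core.

Theorem proposition5 :
  forall (p : param) (N : nat), 0 < N ->
  exists H G : sgraph,
    [/\ proper_subgraph H G, chi H = chi G & rho p H > N * rho p G].
Proof.
move=> p N N0; exists (HH N), (GG N); split.
- exists id; split => //.
    by move=> x y; exact: Hadj_sub.
  right; exists (v0 N), (Ordinal (N0 : 2 < N.+2)).
  by rewrite /= /Gadj /Hadj /=.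
- by rewrite chiH chiG.
- have hH : N.+1 <= rho p (HH N).
    apply: rho_lower.
    + apply/existsP; rewrite -/(colourable _ _) chiH.
      by apply/existsP; exists (col2 N); exact: col2_H.
    + by rewrite card_ord.
    + by move=> c Pc S; exact: H_det.
  have hG : rho p (GG N) <= 1.
    apply: rho_upper.
    + apply/existsP; rewrite -/(colourable _ _) chiG.
      by apply/existsP; exists (col2 N); exact: col2_G.
    + by move=> c Pc S; exact: G_crit.
  apply: leq_ltn_trans hH.
  by rewrite -[X in _ <= X]muln1 leq_mul2l hG orbT.
Qed.
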